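(* Let $n,k \in \mathbb{N}$ with $n \geq k$, and let $c_{n,k}$ be the smallest positive integer such that $c_{n,k} P^{(k)} \in E_n$ for every $P \in E_n$. Then $$c_{n,k} = \mathrm{lcm}\{d_{m,k} : k \leq m \leq n\}.$$ In particular, $c_{n,k}$ divides $q_{n,k}$.
   Context: For $n \in \mathbb{N}$, $E_n$ denotes the set of polynomials $P \in \mathbb{C}[X]$ of degree $\leq n$ (including the zero polynomial) such that $P(\mathbb{Z}) \subset \mathbb{Z}$. $P^{(k)}$ is the $k$-th derivative of $P$. For $n,k \in \mathbb{N}$ with $n \geq k$, define $$F_{n,k} = \sum_{\substack{i_1,\dots,i_k \in \mathbb{N}^* \\ i_1+\dots+i_k = n}} \frac{1}{i_1 i_2 \cdots i_k},$$ with the conventions $F_{0,0}=1$ and $F_{n,0}=0$ for $n \geq 1$; and $d_{n,k}$ is the denominator of the rational number $F_{n,k}$, i.e. the smallest positive integer $d$ with $dF_{n,k} \in \mathbb{Z}$. For $n,k \in \mathbb{N}$ with $n \geq k$, define $$q_{n,k} = \mathrm{lcm}\{i_1 i_2 \cdots i_k : i_1,\dots,i_k \in \mathbb{N}^*,\ i_1+\dots+i_k \leq n\},$$ with the convention $q_{n,0} = 1$. Here $\mathbb{N}^*$ denotes the positive integers. *)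

(* Defs.v *)
(* Complex numbers are modelled by algC (algebraic complex numbers). *)
From HB Require Import structures.
From mathcomp Require Import all_boot all_order all_algebra all_field.
Set Implicit Arguments. Unset Strict Implicit. Unset Printing Implicit Defensive.
Import Order.TTheory GRing.Theory Num.Theory.
Local Open Scope ring_scope.

Definition inE (n : nat) (P : {poly algC}) : Prop :=
  (size P <= n.+1)%N /\ forall z : int, P.[z%:~R] \in Num.int.

Definition posTuple (n k : nat) (t : {ffun 'I_k -> 'I_n.+1}) : bool :=
  [forall i, (0 < t i)%N].
Definition tsum (n k : nat) (t : {ffun 'I_k -> 'I_n.+1}) : nat :=
  (\sum_(i < k) (t i : nat))%N.
Definition tprod (n k : nat) (t : {ffun 'I_k -> 'I_n.+1}) : nat :=
  (\prod_(i < k) (t i : nat))%N.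

(* F_{n,k} = sum over i_1+...+i_k = n (i_j >= 1) of 1/(i_1...i_k);
   for k = 0 the only tuple is empty, giving F_{0,0}=1 and F_{n,0}=0 (n>=1). *)
Definition F (n k : nat) : rat :=
  \sum_(t : {ffun 'I_k -> 'I_n.+1} | posTuple t && (tsum t == n)) ((tprod t)%:R)^-1.

Definition d (n k : nat) : nat := `|denq (F n k)|%N.

Definition q (n k : nat) : nat :=
  (\big[lcmn/1]_(t : {ffun 'I_k -> 'I_n.+1} | posTuple t && (tsum t <= n)) tprod t)%N.

Definition admissible (n k c : nat) : Prop :=
  forall P : {poly algC}, inE n P -> inE n (c%:R *: P^`(k)).

(* Main.v *)
Require Import Defs.
From HB Require Import structures.
From mathcomp Require Import all_boot all_order all_algebra all_field.
From mathcomp Require Import ring.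
Set Implicit Arguments. Unset Strict Implicit. Unset Printing Implicit Defensive.
Import Order.TTheory GRing.Theory Num.Theory.
Local Open Scope ring_scope.

Definition Dl (p : {poly algC}) : {poly algC} := p \Po ('X + 1%:P) - p.

Fact Dl_is_semilinear : semilinear Dl.
Proof.
split=> [a p|p q]; rewrite /Dl.
  by rewrite comp_polyZ scalerBr.
by rewrite comp_polyD opprD addrACA.
Qed.
HB.instance Definition _ := GRing.isSemilinear.Build algC {poly algC} {poly algC} _ Dl
  Dl_is_semilinear.

Definition Dn (i : nat) (p : {poly algC}) := iter i Dl p.

Fact Dn_is_semilinear i : semilinear (Dn i).
Proof.
elim: i => [|i [HZ HD]]; first by split.
split=> [a p|p q]; rewrite /Dn iterSr -/(Dn i _) iterSr -/(Dn i _).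
  by rewrite linearZ HZ.
by rewrite iterSr -/(Dn i _) linearD HD.
Qed.
HB.instance Definition _ i := GRing.isSemilinear.Build algC {poly algC} {poly algC} _ (Dn i)
  (Dn_is_semilinear i).

Lemma DnS i p : Dn i.+1 p = Dn i (Dl p).
Proof. by rewrite /Dn iterSr. Qed.
Lemma DnSl i p : Dn i.+1 p = Dl (Dn i p).
Proof. by []. Qed.

Lemma hornerDl p (x : algC) : (Dl p).[x] = p.[x + 1] - p.[x].
Proof. by rewrite /Dl hornerD hornerN horner_comp !hornerE. Qed.

Lemma Dl_deriv p : Dl p^`() = (Dl p)^`().
Proof. by rewrite /Dl derivB deriv_comp derivD derivX derivC addr0 mulr1. Qed.

Definition act (Q p : {poly algC}) := \sum_(i < size Q) Q`_i *: Dn i p.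

Lemma act_le N (Q p : {poly algC}) : (size Q <= N)%N -> act Q p = \sum_(i < N) Q`_i *: Dn i p.
Proof.
move=> hN; rewrite /act (big_ord_widen N (fun i => Q`_i *: Dn i p) hN) big_mkcond.
apply: eq_bigr => i _; case: ifP => // /negbT; rewrite -leqNgt => hi.
by rewrite nth_default // scale0r.
Qed.

Lemma act0 p : act 0 p = 0.
Proof. by rewrite /act size_poly0 big_ord0. Qed.

Lemma act_add (Q R p : {poly algC}) : act (Q + R) p = act Q p + act R p.
Proof.
pose N := maxn (size Q) (size R).
rewrite (@act_le N) ?(leq_trans (size_add _ _)) // (@act_le N Q) ?leq_maxl //.
rewrite (@act_le N R) ?leq_maxr // -big_split; apply: eq_bigr => i _.
by rewrite coefD scalerDl.
Qed.

Lemma act_scale c (Q p : {poly algC}) : act (c *: Q) p = c *: act Q p.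
Proof.
rewrite (@act_le (size Q)) ?size_scale_leq // /act scaler_sumr.
by apply: eq_bigr => i _; rewrite coefZ scalerA.
Qed.

Lemma act_C c p : act c%:P p = c *: p.
Proof. by rewrite (@act_le 1) ?size_polyC_leq1 // big_ord1 coefC. Qed.

Lemma act_MX (Q p : {poly algC}) : act (Q * 'X) p = act Q (Dl p).
Proof.
have hs : (size (Q * 'X)%R <= (size Q).+1)%N.
  by rewrite (leq_trans (size_mul_leq _ _)) // size_polyX addn2.
rewrite (@act_le (size Q).+1 _ _ hs) big_ord_recl coefMX /= scale0r add0r /act.
by apply: eq_bigr => i _; rewrite coefMX /= add0n -DnSl DnS.
Qed.

Lemma act_pD (Q p r : {poly algC}) : act Q (p + r) = act Q p + act Q r.
Proof. by rewrite /act -big_split; apply: eq_bigr => i _; rewrite linearD scalerDr. Qed.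

Lemma act_pZ (Q p : {poly algC}) a : act Q (a *: p) = a *: act Q p.
Proof.
by rewrite /act scaler_sumr; apply: eq_bigr => i _; rewrite linearZ /= !scalerA mulrC.
Qed.

Lemma act_Dl (Q p : {poly algC}) : Dl (act Q p) = act Q (Dl p).
Proof.
rewrite /act linear_sum; apply: eq_bigr => i _.
by rewrite linearZ /= -DnSl DnS.
Qed.

Lemma actM (Q R p : {poly algC}) : act (Q * R) p = act Q (act R p).
Proof.
elim/poly_ind: Q p => [|Q c IH] p; first by rewrite mul0r !act0.
rewrite mulrDl mulrAC act_add act_MX IH -act_Dl -act_MX mul_polyC act_scale.
by rewrite act_add act_C.
Qed.

Lemma size_Dl (p : {poly algC}) : (size (Dl p) <= (size p).-1)%N.
Proof.
have [->|p0] := eqVneq p 0; first by rewrite linear0 size_poly0.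
have hq : size (p \Po ('X + 1%:P)) = size p by rewrite size_comp_poly2 // size_XaddC.
have hl : lead_coef (p \Po ('X + 1%:P)) = lead_coef p.
  by rewrite lead_coef_comp ?size_XaddC // lead_coefXaddC expr1n mulr1.
apply/leq_sizeP => j hj; rewrite coefB.
have [->|hne] := eqVneq j (size p).-1.
  by move: hl; rewrite /lead_coef hq => ->; rewrite subrr.
have hj' : (size p <= j)%N.
  by move: hj hne; case: (size p) => //= s; rewrite leq_eqVlt => /orP [/eqP->|//]; rewrite eqxx.
by rewrite !nth_default ?hq // subrr.
Qed.

Lemma size_Dn i (p : {poly algC}) : (size (Dn i p) <= size p - i)%N.
Proof.
elim: i => [|i IH]; first by rewrite subn0.
rewrite DnSl (leq_trans (size_Dl _)) // subnS -!subn1 leq_sub2r //.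
Qed.

Lemma Dn_nil i (p : {poly algC}) : (size p <= i)%N -> Dn i p = 0.
Proof.
move=> h; apply/eqP; rewrite -size_poly_eq0 -leqn0.
by rewrite (leq_trans (size_Dn i p)) // leqn0 subn_eq0.
Qed.

Lemma act_trunc N (Q p : {poly algC}) : (size p <= N)%N ->
  act Q p = \sum_(i < N) Q`_i *: Dn i p.
Proof.
move=> hp; pose M := maxn (size Q) N.
rewrite (@act_le M) ?leq_maxl // [RHS](big_ord_widen M (fun i => Q`_i *: Dn i p)) ?leq_maxr //.
rewrite [RHS]big_mkcond; apply: eq_bigr => i _; case: ifP => // /negbT; rewrite -leqNgt => hi.
by rewrite Dn_nil ?(leq_trans hp) // scaler0.
Qed.

Definition Pp (j : nat) : {poly algC} := \prod_(0 <= i < j) ('X - (i%:R)%:P).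
Definition B (j : nat) : {poly algC} := (j`!%:R)^-1 *: Pp j.

Lemma fact_neq0 j : (j`!%:R : algC) != 0.
Proof. by rewrite pnatr_eq0 -lt0n fact_gt0. Qed.

Lemma size_B j : size (B j) = j.+1.
Proof.
rewrite /B size_scale ?invr_eq0 ?fact_neq0 // /Pp.
by rewrite size_prod_XsubC size_iota subn0.
Qed.

Lemma comp_prod (r : seq nat) (F : nat -> {poly algC}) q :
  (\prod_(i <- r) F i) \Po q = \prod_(i <- r) (F i \Po q).
Proof.
elim: r => [|a r IH]; first by rewrite !big_nil comp_polyC.
by rewrite !big_cons comp_polyM IH.
Qed.

Lemma Dl_B j : Dl (B j.+1) = B j.
Proof.
rewrite /B linearZ /= /Dl /Pp comp_prod big_nat_recl // big_nat_recr //=.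
rewrite comp_polyB comp_polyX comp_polyC.
have -> : \prod_(0 <= i < j) (('X - (i.+1%:R)%:P) \Po ('X + 1%:P)) = Pp j.
  by apply: eq_bigr => i _; rewrite comp_polyB comp_polyX comp_polyC -natr1 polyCD; ring.
rewrite -/(Pp j) subr0.
have -> : ('X + 1%:P) * Pp j - Pp j * ('X - (j%:R)%:P) = (j.+1%:R) *: Pp j.
  by rewrite -mul_polyC -natr1 polyCD; ring.
by rewrite scalerA factS natrM invfM mulrAC mulVf ?mul1r // pnatr_eq0.
Qed.

Lemma Dl_B0 : Dl (B 0) = 0.
Proof.
by rewrite /B /Pp big_nil /Dl -polyC1 comp_polyZ comp_polyC subrr.
Qed.

Lemma B_at0 j : (B j).[0] = (j == 0%N)%:R.
Proof.
case: j => [|j]; first by rewrite /B /Pp big_nil hornerZ hornerC fact0 invr1 mulr1.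
rewrite /B hornerZ /Pp horner_prod big_nat_recl // !hornerE.
by rewrite oppr0 /= mulr0 mul0r.
Qed.

Lemma Dn_B i m : Dn i (B m) = if (i <= m)%N then B (m - i) else 0.
Proof.
elim: i => [|i IH]; first by rewrite subn0.
rewrite DnSl IH; case: (leqP i.+1 m) => h.
  by rewrite ifT ?(ltnW h) // -(subnSK h) Dl_B.
case: ifP => [him|_]; last by rewrite linear0.
have -> : i = m by apply/eqP; rewrite eqn_leq him.
by rewrite subnn Dl_B0.
Qed.

Lemma Dn_B_at0 i m : (Dn i (B m)).[0] = (i == m)%:R.
Proof.
rewrite Dn_B; case: leqP => h.
  by rewrite B_at0 subn_eq0 eq_sym eqn_leq h andbT.
by rewrite horner0 (gtn_eqF h).
Qed.

Lemma prod_neg j : \prod_(0 <= i < j) (- (i.+1%:R) : algC) = (-1) ^+ j * j`!%:R.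
Proof.
elim: j => [|j IH]; first by rewrite big_geq // expr0 fact0 mulr1.
rewrite big_nat_recr //= IH factS natrM exprS; ring.
Qed.

Lemma B_deriv0 j : ((B j)^`()).[0] = (-1) ^+ j.+1 / j%:R.
Proof.
case: j => [|j].
  by rewrite /B /Pp big_nil -polyC1 derivZ derivC scaler0 horner0 invr0 mulr0.
rewrite /B derivZ hornerZ /Pp big_nat_recl // derivM !hornerE.
rewrite derivB derivX derivC subr0 hornerC oppr0 mul0r addr0 mul1r horner_prod.
have -> : \prod_(0 <= i < j) ('X - (i.+1%:R)%:P).[0] = \prod_(0 <= i < j) (- (i.+1%:R) : algC).
  by apply: eq_bigr => i _; rewrite !hornerE.
rewrite prod_neg factS natrM !exprS.
have h1 := fact_neq0 j.
have h2 : (j.+1%:R : algC) != 0 by rewrite pnatr_eq0.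
by field; rewrite h1 andbT addrC natr1.
Qed.

Lemma intv_Dn (p : {poly algC}) : (forall z : int, p.[z%:~R] \in Num.int) ->
  forall i (z : int), (Dn i p).[z%:~R] \in Num.int.
Proof.
move=> hp i; elim: i => [|i IH] z; first exact: hp.
rewrite DnSl hornerDl.
have -> : (z%:~R : algC) + 1 = (z + 1)%:~R by rewrite intrD.
by rewrite rpredB.
Qed.

Lemma B_rec j (x : algC) : (B j.+1).[x + 1] = (B j.+1).[x] + (B j).[x].
Proof. by have := hornerDl (B j.+1) x; rewrite Dl_B => ->; rewrite addrCA subrr addr0. Qed.

Lemma intv_B j (z : int) : (B j).[z%:~R] \in Num.int.
Proof.
elim: j z => [|j IH] z.
  by rewrite /B /Pp big_nil fact0 invr1 scale1r hornerE rpred1.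
have hpos : forall a : nat, (B j.+1).[a%:R] \in Num.int.
  elim=> [|a IHa]; first by rewrite B_at0 rpred0.
  by rewrite -natr1 B_rec rpredD // (IH a).
have hneg : forall a : nat, (B j.+1).[- a%:R] \in Num.int.
  elim=> [|a IHa]; first by rewrite oppr0 B_at0 rpred0.
  have h := B_rec j (- a.+1%:R).
  have e : - (a.+1%:R) + 1 = - a%:R :> algC by rewrite -natr1 opprD addrNK.
  rewrite e in h.
  rewrite -(addrK ((B j).[- a.+1%:R]) ((B j.+1).[- a.+1%:R])) -h rpredB //.
  by have := IH (- (a.+1)%:Z); rewrite mulrNz.
case: z => a; first exact: hpos.
by rewrite NegzE mulrNz; apply: hneg.
Qed.

Definition cU (i : nat) : algC := (-1) ^+ i.+1 / i%:R.
Definition U (n : nat) : {poly algC} := \sum_(i < n.+1) cU i *: 'X^i.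

Lemma coefU n i : (U n)`_i = if (i < n.+1)%N then cU i else 0.
Proof.
rewrite /U coef_sum.
case: ltnP => hi.
  rewrite (bigD1 (Ordinal hi)) //= coefZ coefXn eqxx mulr1 big1 ?addr0 //.
  move=> j hj; rewrite coefZ coefXn.
  by case: eqP => [e|]; [move: hj; rewrite -(inj_eq val_inj) /= e eqxx | rewrite mulr0].
rewrite big1 // => j _; rewrite coefZ coefXn.
by case: eqP => [e|]; [move: hi; rewrite e leqNgt ltn_ord | rewrite mulr0].
Qed.

Lemma size_U n : (size (U n) <= n.+1)%N.
Proof. by apply/leq_sizeP => j hj; rewrite coefU ltnNge hj. Qed.

Lemma act_U n p : act (U n) p = \sum_(i < n.+1) cU i *: Dn i p.
Proof.
rewrite (act_le _ (size_U n)); apply: eq_bigr => i _.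
by rewrite coefU ltn_ord.
Qed.

Lemma act_p0 Q : act Q 0 = 0.
Proof. by have := act_pZ Q 0 0; rewrite !scale0r. Qed.

Lemma poly_Dl0 (e : {poly algC}) : Dl e = 0 -> e.[0] = 0 -> e = 0.
Proof.
move=> hD h0.
have hn : forall a : nat, e.[a%:R] = 0.
  elim=> [|a IH] //; rewrite -natr1.
  by have := hornerDl e a%:R; rewrite hD horner0 IH subr0 => <-.
apply: (@roots_geq_poly_eq0 _ e [seq i%:R | i <- iota 0 (size e)]).
- by apply/allP => x /mapP [a _ ->]; rewrite /root hn.
- rewrite map_inj_uniq ?iota_uniq // => a b /eqP; rewrite eqr_nat => /eqP //.
- by rewrite size_map size_iota.
Qed.

Lemma E_B n j : (j <= n)%N -> (B j)^`() = act (U n) (B j).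
Proof.
elim: j => [|j IH] hj.
  apply/eqP; rewrite -subr_eq0; apply/eqP; apply: poly_Dl0.
    by rewrite linearB /= Dl_deriv act_Dl Dl_B0 deriv0 act_p0 subrr.
  rewrite hornerD hornerN B_deriv0 act_U horner_sum.
  rewrite (eq_bigr (fun i : 'I_n.+1 => cU i * (i == 0%N :> nat)%:R)); last first.
    by move=> i _; rewrite hornerZ Dn_B_at0.
  rewrite (bigD1 ord0) //= big1 ?addr0 /cU ?mulr1 ?subrr // => i hi.
  by move: hi; rewrite -(inj_eq val_inj) /= => /negbTE ->; rewrite mulr0.
apply/eqP; rewrite -subr_eq0; apply/eqP; apply: poly_Dl0.
  by rewrite linearB /= Dl_deriv act_Dl Dl_B IH ?subrr // ltnW.
rewrite hornerD hornerN B_deriv0 act_U horner_sum.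
rewrite (eq_bigr (fun i : 'I_n.+1 => cU i * (i == j.+1 :> nat)%:R)); last first.
  by move=> i _; rewrite hornerZ Dn_B_at0.
rewrite (bigD1 (Ordinal (hj : (j.+1 < n.+1)%N))) //= big1 ?addr0 /cU ?eqxx ?mulr1 ?subrr // => i hi.
by rewrite -(inj_eq val_inj) /= in hi; rewrite (negbTE hi) mulr0.
Qed.

Lemma lead_B_neq0 j : lead_coef (B j) != 0.
Proof. by rewrite lead_coef_eq0 -size_poly_eq0 size_B. Qed.

Lemma claim1 n (p : {poly algC}) : (size p <= n.+1)%N -> p^`() = act (U n) p.
Proof.
move=> hp; suff : forall s, (s <= n.+1)%N -> forall p : {poly algC}, (size p <= s)%N ->
    p^`() = act (U n) p by move/(_ _ hp); apply.
elim=> [|s IH] hs q hq.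
  by move: hq; rewrite leqn0 size_poly_eq0 => /eqP ->; rewrite deriv0 act_p0.
have [hq'|hq'] := leqP (size q) s; first by apply: IH => //; rewrite ltnW.
have eq : size q = s.+1 by apply/eqP; rewrite eqn_leq hq hq'.
pose a := lead_coef q / lead_coef (B s).
pose r := q - a *: B s.
have hr : (size r <= s)%N.
  apply/leq_sizeP => j hj; rewrite /r coefB coefZ.
  move: hj; rewrite leq_eqVlt => /orP [/eqP <-|hj].
    have -> : q`_s = lead_coef q by rewrite /lead_coef eq.
    have -> : (B s)`_s = lead_coef (B s) by rewrite /lead_coef size_B.
    by rewrite /a divfK ?lead_B_neq0 // subrr.
  by rewrite !nth_default ?size_B ?eq // mulr0 subrr.
have -> : q = r + a *: B s by rewrite /r subrK.
by rewrite derivD derivZ act_pD act_pZ (IH (ltnW hs) r hr) (@E_B n s).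
Qed.

Lemma size_deriv_leq (p : {poly algC}) : (size p^`() <= size p)%N.
Proof.
have [->|h] := eqVneq p 0; first by rewrite deriv0.
exact: ltnW (lt_size_deriv h).
Qed.

Lemma claimk n k (p : {poly algC}) : (size p <= n.+1)%N -> p^`(k) = act (U n ^+ k) p.
Proof.
move=> hp; elim: k => [|k IH]; first by rewrite expr0 -polyC1 act_C scale1r.
have hs : (size p^`(k) <= n.+1)%N.
  by elim: k {IH} => // k IH; rewrite derivnS (leq_trans (size_deriv_leq _)).
by rewrite derivnS (claim1 hs) IH exprS actM.
Qed.

Lemma prod_cU k n (f : {ffun 'I_k -> 'I_n.+1}) :
  \prod_(i < k) cU (f i) = (-1) ^+ (tsum f + k) * ((tprod f)%:R)^-1.
Proof.
rewrite /cU big_split /= prodrXr prodfV -natr_prod /tprod /tsum.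
congr (_ ^+ _ * _); rewrite -[X in (_ + X)%N]card_ord -sum1_card -big_split /=.
by apply: eq_big => // i _; rewrite addn1.
Qed.

Lemma coefUk n k m :
  (U n ^+ k)`_m = (-1) ^+ (m + k) *
     ratr (\sum_(f : {ffun 'I_k -> 'I_n.+1} | tsum f == m) ((tprod f)%:R)^-1 : rat).
Proof.
have -> : U n ^+ k = \prod_(j < k) U n by rewrite prodr_const card_ord.
rewrite /U bigA_distr_bigA coef_sum rmorph_sum mulr_sumr big_mkcond /=.
rewrite [RHS]big_mkcond; apply: eq_bigr => f _.
have -> : \prod_(i < k) (cU (f i) *: 'X^(f i)) = (\prod_(i < k) cU (f i)) *: 'X^(tsum f).
  rewrite -mul_polyC rmorph_prod /= /tsum -prodrXr -big_split /=.
  by apply: eq_bigr => i _; rewrite mul_polyC.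
rewrite coefZ coefXn prod_cU eq_sym; case: eqP => [->|_]; last by rewrite mulr0.
by rewrite mulr1 fmorphV /= ratr_nat.
Qed.

Lemma ratr_intE (x : rat) : (ratr x \in (Num.int : qualifier 1 algC)) = (x \in Num.int).
Proof.
apply/idP/idP => [/intrP [z hz]|/intrP [z ->]]; last by rewrite ratr_int intr_int.
suff -> : x = z%:~R by rewrite intr_int.
by apply: (fmorph_inj (@ratr algC)); rewrite /= ratr_int -hz.
Qed.

Lemma den_int (c : nat) (x : rat) : (c%:R * x \in Num.int) = (`|denq x|%N %| c)%N.
Proof.
apply/idP/idP.
  case/intrP => z hz.
  have h : (c%:Z * numq x = z * denq x)%R.
    apply: (@intr_inj rat); rewrite !intrM numqE mulrA -hz.
    by [].
  have : (`|denq x| %| `|numq x| * c)%N.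
    have e : `|(c%:Z * numq x)%R|%N = (c * `|numq x|)%N by rewrite abszM.
    by rewrite mulnC -e h abszM dvdn_mull.
  by rewrite Gauss_dvdr // coprime_sym coprime_num_den.
case/dvdnP => t ->.
rewrite natrM -mulrA.
have -> : (`|denq x|%N%:R : rat) * x = (numq x)%:~R.
  by rewrite numqE mulrC; congr (_ * _); rewrite -absz_denq.
by rewrite rpredM ?natr_int ?intr_int.
Qed.

Lemma tprod0 k n (f : {ffun 'I_k -> 'I_n.+1}) : ~~ posTuple f -> tprod f = 0%N.
Proof.
move/forallPn => [i]; rewrite -eqn0Ngt => /eqP hi.
by rewrite /tprod (bigD1 i) //= hi mul0n.
Qed.

Lemma tsum_ge k n (f : {ffun 'I_k -> 'I_n.+1}) i : (f i <= tsum f)%N.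
Proof. by rewrite /tsum (bigD1 i) //= leq_addr. Qed.

Lemma Fwide n m k : (m <= n)%N ->
  F m k = \sum_(f : {ffun 'I_k -> 'I_n.+1} | tsum f == m) ((tprod f)%:R)^-1.
Proof.
move=> hmn.
rewrite [RHS](bigID (@posTuple n k)) /= [X in _ + X]big1 ?addr0; last first.
  by move=> f /andP [_ /tprod0 ->]; rewrite invr0.
have hle : (m.+1 <= n.+1)%N by [].
pose h (t : {ffun 'I_k -> 'I_m.+1}) : {ffun 'I_k -> 'I_n.+1} :=
  [ffun i => widen_ord hle (t i)].
pose g (t : {ffun 'I_k -> 'I_n.+1}) : {ffun 'I_k -> 'I_m.+1} :=
  [ffun i => inord (t i)].
have hv t i : (h t i : nat) = t i by rewrite ffunE.
rewrite (@reindex _ _ _ _ _ h); last first.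
  exists g => [t _|t].
    by apply/ffunP => i; rewrite ffunE; apply: val_inj; rewrite /= hv inordK.
  rewrite inE => /andP [/eqP hs _]; apply/ffunP => i; rewrite ffunE; apply: val_inj.
  by rewrite /= ffunE inordK // ltnS -hs tsum_ge.
rewrite /F; apply: eq_big => [t|t _].
  rewrite andbC; congr (_ && _).
    by rewrite /tsum; congr (_ == _); apply: eq_bigr => i _; rewrite hv.
  by rewrite /posTuple; apply: eq_forallb => i; rewrite hv.
by congr (_%:R^-1); rewrite /tprod; apply: eq_bigr => i _; rewrite hv.
Qed.

Lemma F_small m k : (m < k)%N -> F m k = 0.
Proof.
move=> hmk; rewrite /F big1 // => t /andP [/forallP hp /eqP hs].
have : (k <= tsum t)%N.
  rewrite -[X in (X <= _)%N]card_ord -sum1_card /tsum.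
  by apply: leq_sum => i _; apply: hp.
by rewrite hs leqNgt hmk.
Qed.

Lemma d_dvd_q n m k : (m <= n)%N -> (d m k %| q n k)%N.
Proof.
move=> hmn; rewrite /d -den_int (Fwide k hmn) mulr_sumr rpred_sum // => f /eqP hs.
case hp : (posTuple f); last by rewrite tprod0 ?hp // invr0 mulr0 rpred0.
apply: intr_nat; apply: Qnat_dvd.
apply: (biglcmn_sup f) => //; rewrite hp /= hs //.
Qed.

Lemma size_derivn_leq (p : {poly algC}) k : (size p^`(k) <= size p)%N.
Proof.
by elim: k => // k IH; rewrite derivnS (leq_trans (size_deriv_leq _)).
Qed.

Lemma biglcm_dvd (a b X : nat) (G : nat -> nat) :
  (forall m, (a <= m < b)%N -> (G m %| X)%N) -> (\big[lcmn/1]_(a <= m < b) G m %| X)%N.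
Proof.
move=> h; rewrite big_seq; apply: (big_ind (fun y => y %| X)%N) => //.
  by move=> x y hx hy; rewrite dvdn_lcm hx hy.
by move=> i; rewrite mem_index_iota; apply: h.
Qed.

Lemma biglcm_sup (a b m : nat) (G : nat -> nat) :
  (a <= m < b)%N -> (G m %| \big[lcmn/1]_(a <= i < b) G i)%N.
Proof.
move=> h; rewrite (bigD1_seq m) ?mem_index_iota ?iota_uniq //=.
exact: dvdn_lcml.
Qed.

Lemma biglcm_gt0 (a b : nat) (G : nat -> nat) :
  (forall m, (0 < G m)%N) -> (0 < \big[lcmn/1]_(a <= m < b) G m)%N.
Proof.
move=> h; apply: (big_ind (fun y => 0 < y)%N) => // x y hx hy.
by rewrite lcmn_gt0 hx hy.
Qed.

Lemma d_gt0 m k : (0 < d m k)%N.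
Proof. by rewrite /d absz_gt0 denq_neq0. Qed.

Lemma sign_int e : ((-1) ^+ e : algC) \in Num.int.
Proof. by rewrite rpredX // rpredN rpred1. Qed.

Lemma coef_int n k c i : (i < n.+1)%N -> (k <= i -> d i k %| c)%N ->
  c%:R * (U n ^+ k)`_i \in (Num.int : qualifier 1 algC).
Proof.
move=> hi hd; rewrite coefUk -Fwide // mulrCA rpredM ?sign_int //.
rewrite -ratr_nat -rmorphM ratr_intE den_int.
case: (leqP k i) => hki; first exact: hd.
by rewrite F_small.
Qed.

Theorem theorem2 (n k : nat) (hkn : (k <= n)%N) :
  let L := (\big[lcmn/1]_(k <= m < n.+1) d m k)%N in
  [/\ (0 < L)%N, admissible n k L,
      (forall c : nat, (0 < c)%N -> admissible n k c -> (L <= c)%N)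
    & (L %| q n k)%N].
Proof.
move=> L; split.
- by apply: biglcm_gt0 => m; apply: d_gt0.
- move=> P [hs hint]; split.
    by rewrite (leq_trans (size_scale_leq _ _)) // (leq_trans (size_derivn_leq _ _)).
  move=> z; rewrite hornerZ (claimk k hs) (act_trunc _ hs) horner_sum mulr_sumr.
  apply: rpred_sum => i _; rewrite hornerZ mulrA rpredM ?intv_Dn //.
  apply: coef_int => // hki; apply: biglcm_sup.
  by rewrite hki ltn_ord.
- move=> c hc hadm; apply: dvdn_leq => //; apply: biglcm_dvd => m /andP [hkm hmn].
  have hB : Defs.inE n (B m) by split; [rewrite size_B | exact: intv_B].
  have hBs : (size (B m) <= n.+1)%N by rewrite size_B.
  have [_ /(_ 0)] := hadm _ hB.
  rewrite mulr0z hornerZ (claimk k hBs) (act_trunc _ hBs) horner_sum.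
  rewrite (bigD1 (Ordinal hmn)) //= big1 ?addr0; last first.
    move=> i hi; rewrite hornerZ Dn_B_at0.
    by move: hi; rewrite -(inj_eq val_inj) /= => /negbTE ->; rewrite mulr0.
  rewrite hornerZ Dn_B_at0 eqxx mulr1 coefUk -Fwide // => h.
  have e1 : ((-1) ^+ (m + k) * (-1) ^+ (m + k) : algC) = 1.
    by rewrite -exprMn mulrNN mulr1 expr1n.
  have h2 := rpredM (sign_int (m + k)) h.
  rewrite mulrCA (mulrA ((-1) ^+ (m + k))) e1 mul1r in h2.
  by rewrite /d -den_int -ratr_intE rmorphM /= rmorph_nat.
- apply: biglcm_dvd => m /andP [_ hmn]; apply: d_dvd_q.
  by rewrite -ltnS.
Qed.
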